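(* Let $(X,d,\mu)$ be a metric median algebra and let $M\subseteq N$ be finite median subalgebras of $(X,\mu)$. Then $d^M_\mu(x,y)\le d^N_\mu(x,y)$ for all $x,y\in X$.
   Context: A median algebra is a set with a ternary operation $\mu$ such that $\mu(x,y,z)=\mu(x,z,y)=\mu(y,z,x)$, $\mu(x,x,y)=x$ and $\mu(\mu(x,y,z),u,v)=\mu(x,\mu(y,u,v),\mu(z,u,v))$. The median interval is $I(x,y)=\{z:\mu(x,y,z)=z\}$; a subset is convex if it contains $I(a,b)$ for all its elements $a,b$; a subalgebra is a subset closed under $\mu$. A wall of a median algebra $M$ is a partition $M=h\sqcup h^c$ into two non-empty convex subsets; it separates $a,b$ if they lie in different parts; $\mathcal{W}(M)$ is the set of walls and $\mathcal{W}^M(a|b)$ the set of walls separating $a,b$. For a finite median algebra $M$, an edge is a pair $\{x,y\}\subseteq M$ separated by exactly one wall of $M$. A metric median algebra $(X,d,\mu)$ is a median algebra with a metric $d$ for which $\mu$ is continuous. For a finite subalgebra $M\subseteq X$ and $W\in\mathcal{W}(M)$, let $\lambda^M_{\max}(W)=\max d(a,b)$ over edges $\{a,b\}$ of $M$ separated by $W$; for $x,y\in X$ set $d^M_\mu(x,y)=\sum_{W\in\mathcal{W}^M(x|y)}\lambda^M_{\max}(W)$ if $x,y\in M$, and $d^M_\mu(x,y)=0$ otherwise. *)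

(* Defs.v *)
From HB Require Import structures.
From mathcomp Require Import all_boot all_order all_algebra.
From mathcomp Require Import finmap.
From mathcomp Require Import reals.
Set Implicit Arguments. Unset Strict Implicit. Unset Printing Implicit Defensive.
Import Order.TTheory GRing.Theory Num.Theory.
Local Open Scope fset_scope.
Local Open Scope ring_scope.

Section MedianDefs.
Variables (R : realType) (X : choiceType).

Definition median_algebra (mu : X -> X -> X -> X) : Prop :=
  [/\ (forall x y z, mu x y z = mu x z y),
      (forall x y z, mu x y z = mu y z x),
      (forall x y, mu x x y = x) &
      (forall x y z u v, mu (mu x y z) u v = mu x (mu y u v) (mu z u v))].

Definition is_metric (d : X -> X -> R) : Prop :=
  [/\ (forall x y, d x y = 0 <-> x = y),
      (forall x y, d x y = d y x) &
      (forall x y z, d x z <= d x y + d y z)].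

Definition mu_continuous (d : X -> X -> R) (mu : X -> X -> X -> X) : Prop :=
  forall x y z (e : R), 0 < e -> exists2 delta : R, 0 < delta &
    forall x' y' z', d x x' < delta -> d y y' < delta -> d z z' < delta ->
      d (mu x y z) (mu x' y' z') < e.

Definition metric_median_algebra (d : X -> X -> R) (mu : X -> X -> X -> X) :=
  [/\ median_algebra mu, is_metric d & mu_continuous d mu].

Variable mu : X -> X -> X -> X.

Definition subalgebra (M : {fset X}) : Prop :=
  forall a b c, a \in M -> b \in M -> c \in M -> mu a b c \in M.

(* Convexity of h inside the (sub)algebra M: h contains I(a,b) ∩ M. *)
Definition convex_in (M h : {fset X}) : bool :=
  [forall a : h, forall b : h, forall z : M,
     (mu (val a) (val b) (val z) == val z) ==> (val z \in h)].

Definition halfspace (M h : {fset X}) : bool :=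
  [&& h `<=` M, h != fset0, M `\` h != fset0, convex_in M h & convex_in M (M `\` h)].

Definition walls (M : {fset X}) : {fset {fset {fset X}}} :=
  [fset [fset h; M `\` h] | h in fpowerset M & halfspace M h].

Definition separates (W : {fset {fset X}}) (a b : X) : bool :=
  [exists h : W, (a \in val h) && (b \notin val h)].

Definition sep_walls (M : {fset X}) (a b : X) : {fset {fset {fset X}}} :=
  [fset W in walls M | separates W a b].

Definition edge (M : {fset X}) (a b : X) : bool :=
  [&& a \in M, b \in M & #|` sep_walls M a b| == 1%N].

Variable d : X -> X -> R.

Definition lambda_max (M : {fset X}) (W : {fset {fset X}}) : R :=
  \big[Num.max/0]_(p <- M `*` M | edge M p.1 p.2 && separates W p.1 p.2) d p.1 p.2.

Definition dM (M : {fset X}) (x y : X) : R :=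
  if (x \in M) && (y \in M) then \sum_(W <- sep_walls M x y) lambda_max M W
  else 0.

End MedianDefs.

(* Main.v *)
Require Import Defs.
From HB Require Import structures.
From mathcomp Require Import all_boot all_order all_algebra.
From mathcomp Require Import finmap.
From mathcomp Require Import reals.
Set Implicit Arguments. Unset Strict Implicit. Unset Printing Implicit Defensive.
Import Order.TTheory GRing.Theory Num.Theory.
Local Open Scope fset_scope.
Local Open Scope ring_scope.

Section S.
Variables (X : choiceType) (mu : X -> X -> X -> X).

Lemma convexP (M h : {fset X}) : reflect
  (forall u v z, u \in h -> v \in h -> z \in M -> mu u v z = z -> z \in h)
  (convex_in mu M h).
Proof.
apply: (iffP idP).
  move=> C u v z hu hv zM e.
  have := forallP (forallP (forallP C [` hu]) [` hv]) [` zM].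
  by move/implyP; apply; rewrite /= e.
move=> C; apply/forallP => -[u hu]; apply/forallP => -[v hv]; apply/forallP => -[z zM].
by apply/implyP => /= /eqP; apply: C.
Qed.

Lemma separatesP (W : {fset {fset X}}) a b :
  reflect (exists2 h, h \in W & (a \in h) && (b \notin h)) (separates W a b).
Proof.
apply: (iffP existsP) => [[h H]|[h hW H]]; first by exists (val h) => //; exact: valP.
by exists [` hW].
Qed.

Lemma wallsP (M : {fset X}) W : reflect
  (exists2 h, halfspace mu M h & W = [fset h; M `\` h]) (W \in walls mu M).
Proof.
rewrite /walls; apply: (iffP idP).
  by case/imfsetP => h /= /andP[_ H] ->; exists h.
case=> h H ->; apply/imfsetP; exists h => //=; apply/andP; split => //.
by rewrite fpowersetE; case/and5P: H.
Qed.

Lemma sep_wallsE M a b W :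
  (W \in sep_walls mu M a b) = (W \in walls mu M) && separates W a b.
Proof. by rewrite !inE. Qed.


Hypothesis Hmed : median_algebra mu.

Lemma muC1 x y z : mu x y z = mu x z y. Proof. by case: Hmed. Qed.
Lemma muC2 x y z : mu x y z = mu y z x. Proof. by case: Hmed. Qed.
Lemma muI x y : mu x x y = x. Proof. by case: Hmed. Qed.
Lemma muD x y z u v : mu (mu x y z) u v = mu x (mu y u v) (mu z u v).
Proof. by case: Hmed. Qed.
Lemma muC12 x y z : mu x y z = mu y x z.
Proof. by rewrite muC2 muC1. Qed.
Lemma muC13 x y z : mu x y z = mu z y x.
Proof. by rewrite (muC2 z y x) (muC12 y x z). Qed.
Lemma muI2 x y : mu x y x = x. Proof. by rewrite muC1 muI. Qed.
Lemma muI3 x y : mu y x x = x. Proof. by rewrite (muC13 y x x) muI. Qed.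
Lemma muG1 x y z : mu (mu x y z) y z = mu x y z.
Proof. by rewrite muD muI muI2. Qed.

Lemma muL1 a b c w : mu a b c = c -> mu a c w = w -> mu a b w = w.
Proof.
move=> Hc Hw.
have -> : mu a b w = mu (mu w a c) a b by rewrite (muC2 w a c) Hw (muC2 w a b).
by rewrite muD muI (muC2 c a b) Hc (muC2 w a c).
Qed.


Lemma muG0 a c z : mu a c (mu a c z) = mu a c z.
Proof. have := muG1 z a c; rewrite (muC2 z a c) (muC2 (mu a c z) a c) //. Qed.

Variable N : {fset X}.
Hypothesis HN : subalgebra mu N.

Definition adj a c := forall w, w \in N -> mu a c w = w -> w = a \/ w = c.
Definition hs a c := [fset z in N | mu a c z == a].

Lemma hs_proj a c z : a \in N -> c \in N -> adj a c -> z \in N ->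
  mu a c z = a \/ mu a c z = c.
Proof. by move=> aN cN ac zN; apply: ac; [exact: HN | exact: muG0]. Qed.

Lemma in_hs a c z : (z \in hs a c) = (z \in N) && (mu a c z == a).
Proof. by rewrite !inE. Qed.

Lemma hs_half a c : a \in N -> c \in N -> a != c -> adj a c ->
  halfspace mu N (hs a c).
Proof.
move=> aN cN ac Hadj.
apply/and5P; split.
- by apply/fsubsetP => z; rewrite in_hs => /andP[].
- by apply/fset0Pn; exists a; rewrite in_hs aN muI2 eqxx.
- apply/fset0Pn; exists c; by rewrite !inE cN muI3 /= eq_sym ac.
- apply/(convexP N (hs a c)) => u v z; rewrite !in_hs => /andP[uN /eqP ua] /andP[vN /eqP va] zN e.
  rewrite zN /=; case: (hs_proj aN cN Hadj zN) => [->//|zc].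
  have : mu z a c = mu u (mu v a c) (mu z a c) by rewrite -muD e.
  rewrite (muC2 v a c) va (muC2 z a c) zc (muC2 u a c) ua => E.
  by move: ac; rewrite -E eqxx.
- apply/convexP => u v z; rewrite !inE => /andP[/negP uh uN] /andP[/negP vh vN] zN e.
  rewrite zN andbT /=; apply/negP => /eqP za.
  have uc : mu a c u = c.
    case: (hs_proj aN cN Hadj uN) => // ua; case: uh; by rewrite uN ua eqxx.
  have vc : mu a c v = c.
    case: (hs_proj aN cN Hadj vN) => // va; case: vh; by rewrite vN va eqxx.
  have : mu z a c = mu u (mu v a c) (mu z a c) by rewrite -muD e.
  rewrite (muC2 v a c) vc (muC2 z a c) za (muC1 u c a) (muC2 u a c) uc => E.
  by move: ac; rewrite E eqxx.
Qed.


Lemma count_lt (T : eqType) (p q : pred T) (s : seq T) y :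
  (forall x, p x -> q x) -> y \in s -> q y -> ~~ p y -> (count p s < count q s)%N.
Proof.
move=> pq; elim: s => //= x s IH; rewrite inE => /orP[/eqP<-|ys] qy npy.
  rewrite qy (negbTE npy) add0n add1n ltnS; exact: sub_count.
have h1 : (p x <= q x)%N by case: (p x) (pq x) => // ->.
by rewrite -addnS; apply: leq_add h1 (IH ys qy npy).
Qed.

Lemma exists_adj a b : a \in N -> b \in N -> a != b ->
  exists c, [/\ c \in N, a != c, mu a b c = c & adj a c].
Proof.
move=> aN bN ab.
suff: forall n c, (count (fun w => mu a c w == w) N < n)%N -> c \in N -> a != c ->
   mu a b c = c -> exists c, [/\ c \in N, a != c, mu a b c = c & adj a c].
  by move/(_ _ b (ltnSn _) bN ab (muI3 _ _)).
elim=> // n IH c lt cN ac cI.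
case: (boolP (has (fun w => (mu a c w == w) && (w != a) && (w != c)) N)).
  case/hasP => w wN /andP[/andP[/eqP wI wa] wc].
  apply: (IH w) => //; last 2 first.
  - by rewrite eq_sym.
  - exact: muL1 cI wI.
  rewrite -ltnS; apply: leq_trans lt; apply: (@count_lt _ _ _ _ c).
  - move=> x /eqP H; apply/eqP; exact: muL1 wI H.
  - exact: cN.
  - by rewrite muI3.
  - apply/eqP => H; move: wc; by rewrite -H muC1 wI eqxx.
move/hasPn => H; exists c; split => // w wN wI.
have := H w wN; rewrite wI eqxx /=.
by case: (eqVneq w a) => [->|_]; [left|case: (eqVneq w c) => [->|]; [right|]].
Qed.

Lemma halfspace_compl h : halfspace mu N h -> halfspace mu N (N `\` h).
Proof.
case/and5P => hN h0 c0 ch cc; apply/and5P; split => //.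
- exact: fsubsetDl.
- by rewrite fsetDK.
- by rewrite fsetDK.
Qed.

Lemma wall_of V k : V \in walls mu N -> k \in V ->
  halfspace mu N k /\ V = [fset k; N `\` k].
Proof.
case/(wallsP N V) => h H ->; rewrite in_fset2 => /orP[]/eqP->; first by [].
split; first exact: halfspace_compl.
case/and5P: H => hN _ _ _ _.
by rewrite fsetDK // fsetUC.
Qed.


Section Adj.
Variables a c : X.
Hypotheses (aN : a \in N) (cN : c \in N) (ac : a != c) (Hadj : adj a c).
Let h := hs a c.
Let W0 := [fset h; N `\` h].

Lemma W0_wall : W0 \in walls mu N.
Proof. by apply/(wallsP N W0); exists h => //; exact: hs_half. Qed.

Lemma a_in_h : a \in h. Proof. by rewrite in_hs aN muI2 eqxx. Qed.
Lemma c_notin_h : c \notin h. Proof. by rewrite in_hs cN muI3 /= eq_sym. Qed.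

Lemma sep_ac : sep_walls mu N a c = [fset W0].
Proof.
apply/fsetP => V; rewrite sep_wallsE inE; apply/andP/eqP.
  case=> VW /separatesP [k kV /andP[ak ck]].
  case: (wall_of VW kV) => Hk ->.
  suff -> : k = h by [].
  have kN : k `<=` N by case/and5P: Hk.
  apply/fsetP => z; rewrite in_hs; apply/idP/idP.
    move=> zk; have zN : z \in N by apply: (fsubsetP kN).
    rewrite zN /=; case: (hs_proj aN cN Hadj zN) => [->//|zc].
    case/and5P: Hk => _ _ _ /(convexP N k) Ck _.
    have : mu a c z \in k.
      apply: (Ck a z) => //; first exact: HN.
      have := muG1 c a z; rewrite (muC12 c a z) (muC2 (mu a c z) a z) //.
    by rewrite zc (negbTE ck).
  case/andP => zN /eqP za; apply/negPn/negP => zk.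
  case/and5P: Hk => _ _ _ _ /(convexP N (N `\` k)) Ck.
  have : mu a c z \in N `\` k.
    apply: (Ck c z); rewrite ?inE ?ck ?cN ?zk ?zN //; first exact: HN.
    have := muG1 a c z; rewrite (muC2 (mu a c z) c z) //.
  by rewrite za inE ak.
move=> ->; split; first exact: W0_wall.
apply/separatesP; exists h; first by rewrite in_fset2 eqxx.
by rewrite a_in_h c_notin_h.
Qed.

Lemma edge_ac : edge mu N a c.
Proof. by rewrite /edge aN cN sep_ac cardfs1. Qed.

Variable b : X.
Hypotheses (bN : b \in N) (cI : mu a b c = c).

Lemma b_notin_h : b \notin h.
Proof. by rewrite in_hs bN /= -muC1 cI eq_sym. Qed.

Lemma W0_sep_ab : W0 \in sep_walls mu N a b.
Proof.
rewrite sep_wallsE W0_wall /=; apply/separatesP; exists h.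
  by rewrite in_fset2 eqxx.
by rewrite a_in_h b_notin_h.
Qed.

Lemma W0_notsep_cb : W0 \notin sep_walls mu N c b.
Proof.
rewrite sep_wallsE negb_and; apply/orP; right; apply/negP => /separatesP[k].
rewrite in_fset2 => /orP[]/eqP-> /andP[].
  by rewrite (negbTE c_notin_h).
by move=> _; rewrite inE bN b_notin_h.
Qed.

Lemma sep_cb_sub : {subset sep_walls mu N c b <= sep_walls mu N a b}.
Proof.
move=> V; rewrite !sep_wallsE => /andP[VW /separatesP[k kV /andP[ck bk]]].
rewrite VW /=; apply/separatesP; exists k => //; rewrite bk andbT.
apply/negPn/negP => ak.
case: (wall_of VW kV) => Hk _.
case/and5P: Hk => _ _ _ _ /(convexP N (N `\` k)) Ck.
have : c \in N `\` k by apply: (Ck a b); rewrite ?inE ?ak ?bk ?aN ?bN.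
by rewrite inE ck.
Qed.

End Adj.


Lemma sum_sub (R : realType) (I : eqType) (s1 s2 : seq I) (F : I -> R) :
  uniq s1 -> uniq s2 -> {subset s1 <= s2} -> (forall i, i \in s2 -> 0 <= F i) ->
  \sum_(i <- s1) F i <= \sum_(i <- s2) F i.
Proof.
move=> u1 u2 sub F0.
rewrite [X in _ <= X](bigID (fun i => i \in s1)) /=.
set S := (X in _ <= X + _); have -> : S = \sum_(i <- s1) F i.
  rewrite /S -big_filter; apply: perm_big; apply: uniq_perm => //.
    exact: filter_uniq.
  by move=> x; rewrite mem_filter; apply/andP/idP => [[]//|h]; split => //; apply: sub.
rewrite -[X in X <= _]addr0 lerD2l; rewrite big_seq_cond; apply: sumr_ge0 => i /andP[? _]; exact: F0.
Qed.

Variables (R : realType) (d : X -> X -> R).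
Hypothesis Hd : is_metric d.

Lemma lam_ge0 M W : 0 <= lambda_max mu d M W.
Proof. rewrite /lambda_max; elim/big_rec: _ => // i x _ h; by rewrite le_max h orbT. Qed.

Lemma lam_bound M W p q : p \in M -> q \in M -> edge mu M p q -> separates W p q ->
  d p q <= lambda_max mu d M W.
Proof.
move=> pM qM e s; rewrite /lambda_max.
apply: (@le_bigmax_seq _ _ _ _ _ (p, q)) => //=; last by rewrite e s.
by rewrite in_fsetM pM qM.
Qed.

Lemma sum_lam_ge0 M (s : seq {fset {fset X}}) : 0 <= \sum_(W <- s) lambda_max mu d M W.
Proof. by apply: sumr_ge0 => W _; exact: lam_ge0. Qed.

Lemma dist_le_sum a b : a \in N -> b \in N ->
  d a b <= \sum_(W <- sep_walls mu N a b) lambda_max mu d N W.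
Proof.
move=> aN bN.
suff: forall n a, (size (sep_walls mu N a b) < n)%N -> a \in N ->
  d a b <= \sum_(W <- sep_walls mu N a b) lambda_max mu d N W by apply; [exact: ltnSn|].
elim=> // n IH {}a lt {}aN.
case: (eqVneq a b) => [->|ab].
  case: Hd => [H _ _]; have -> : d b b = 0 by apply/H.
  exact: sum_lam_ge0.
case: (exists_adj aN bN ab) => c [cN ac cI Hadj].
set W0 := [fset hs a c; N `\` hs a c].
have n0 := W0_notsep_cb cN ac bN cI.
have sub := sep_cb_sub aN cN bN cI.
have U : uniq (W0 :: (sep_walls mu N c b : seq _)) by rewrite /= n0 fset_uniq.
have S : {subset W0 :: (sep_walls mu N c b : seq _) <= sep_walls mu N a b}.
  move=> V; rewrite inE => /orP[/eqP->|]; first by move: (W0_sep_ab aN cN ac Hadj bN cI).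
  exact: sub.
apply: le_trans (sum_sub U (fset_uniq _) S (fun i _ => lam_ge0 N i)).
rewrite big_cons.
case: Hd => [_ _ T]; apply: le_trans (T a c b) _.
apply: lerD.
  apply: lam_bound => //; first exact: edge_ac aN cN ac Hadj.
  apply/separatesP; exists (hs a c); first by rewrite in_fset2 eqxx.
  by rewrite a_in_h // c_notin_h.
apply: IH => //; rewrite -ltnS; apply: leq_trans lt.
by have := uniq_leq_size U S.
Qed.

End S.

Section Final.
Variables (X : choiceType) (mu : X -> X -> X -> X).
Hypothesis Hmed : median_algebra mu.
Variables (M N : {fset X}).
Hypothesis HN : subalgebra mu N.
Hypothesis MN : M `<=` N.

Definition restrict (W : {fset {fset X}}) : {fset {fset X}} := [fset k `&` M | k in W].

Lemma eqDM k : (N `\` k) `&` M = M `\` (k `&` M).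
Proof.
apply/fsetP => z; rewrite !inE; case zM: (z \in M); last by rewrite !andbF.
by rewrite (fsubsetP MN z zM) !andbT.
Qed.

Lemma restrict_sep W a b : a \in M -> b \in M -> W \in walls mu N -> separates W a b ->
  restrict W \in sep_walls mu M a b.
Proof.
move=> aM bM WW /separatesP[k kW /andP[ak bk]].
case: (wall_of WW kW) => Hk EW.
have RE : restrict W = [fset k `&` M; M `\` (k `&` M)].
  apply/fsetP => Z; rewrite /restrict; apply/imfsetP/idP.
    case=> k0 /=; rewrite EW in_fset2 => /orP[]/eqP-> ->.
      by rewrite in_fset2 eqxx.
    by rewrite eqDM in_fset2 eqxx orbT.
  rewrite in_fset2 => /orP[]/eqP->.
    by exists k => //=; rewrite EW in_fset2 eqxx.
  by exists (N `\` k); rewrite /= ?EW ?in_fset2 ?eqxx ?orbT ?eqDM.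
rewrite sep_wallsE; apply/andP; split.
  apply/(wallsP mu M (restrict W)); exists (k `&` M) => //.
  case/and5P: Hk => kN _ _ /(convexP mu N k) Ck /(convexP mu N (N `\` k)) Cc.
  apply/and5P; split.
  - exact: fsubsetIr.
  - by apply/fset0Pn; exists a; rewrite inE ak aM.
  - by apply/fset0Pn; exists b; rewrite !inE bM !andbT.
  - apply/(convexP mu M (k `&` M)) => u v z; rewrite !inE => /andP[uk uM] /andP[vk vM] zM e.
    by rewrite zM andbT; apply: (Ck u v) => //; exact: (fsubsetP MN).
  - apply/(convexP mu M (M `\` (k `&` M))) => u v z; rewrite !inE.
    move=> /andP[uk uM] /andP[vk vM] zM e; rewrite zM andbT.
    have uN := fsubsetP MN u uM; have vN := fsubsetP MN v vM.
    have zN := fsubsetP MN z zM.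
    have uNk : u \in N `\` k by move: uk; rewrite !inE uN uM !andbT.
    have vNk : v \in N `\` k by move: vk; rewrite !inE vN vM !andbT.
    have := Cc u v z uNk vNk zN e; rewrite inE => /andP[zk _].
    by rewrite andbT.
apply/separatesP; exists (k `&` M).
  by rewrite RE in_fset2 eqxx.
by rewrite !inE ak aM bM !andbT.
Qed.

Lemma lift_sep W x y : y \in M -> separates (restrict W) x y -> separates W x y.
Proof.
move=> yM /separatesP[k0 /imfsetP[k /= kW ->]]; rewrite !inE yM andbT => /andP[/andP[xk _] yk].
by apply/separatesP; exists k => //; rewrite xk yk.
Qed.

End Final.

Theorem lemma3p4 (R : realType) (X : choiceType) (d : X -> X -> R)
  (mu : X -> X -> X -> X) (M N : {fset X}) :
  metric_median_algebra d mu ->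
  subalgebra mu M -> subalgebra mu N -> M `<=` N ->
  forall x y : X, dM mu d M x y <= dM mu d N x y.
Proof.
move=> [Hmed Hd _] HM HN MN x y.
rewrite /dM; case: (boolP ((x \in M) && (y \in M))) => [/andP[xM yM]|_]; last first.
  by case: ifP => _; [exact: sum_lam_ge0 | exact: lexx].
have xN := fsubsetP MN x xM; have yN := fsubsetP MN y yM.
rewrite xN yN /=.
set T := sep_walls mu N x y.
apply: (@le_trans _ _ (\sum_(W <- sep_walls mu M x y)
   \sum_(W' <- T | restrict M W' == W) lambda_max mu d N W')).
  rewrite [X in X <= _]big_seq [X in _ <= X]big_seq; apply: ler_sum => W WS.
  set RHS := (X in _ <= X).
  rewrite /lambda_max; elim/big_ind: _.
  - by rewrite /RHS; apply: sumr_ge0 => W' _; exact: lam_ge0.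
  - by move=> u v hu hv; rewrite ge_max hu hv.
  - case=> a b /= /andP[e s].
    case/and3P: e => aM bM c1.
    have aN := fsubsetP MN a aM; have bN := fsubsetP MN b bM.
    apply: le_trans (dist_le_sum Hmed HN Hd aN bN) _.
    rewrite /RHS -[X in _ <= X]big_filter; apply: sum_sub.
    + exact: fset_uniq.
    + exact: filter_uniq (fset_uniq _).
    + move=> V VS; rewrite mem_filter.
      move: (VS); rewrite sep_wallsE => /andP[VW Vs].
      have R1 := restrict_sep MN aM bM VW Vs.
      have R2 : W \in sep_walls mu M a b.
        by rewrite sep_wallsE s andbT; move: WS; rewrite sep_wallsE => /andP[].
      have EW : restrict M V = W.
        case/cardfs1P: c1 => Z EZ; move: R1 R2; rewrite EZ.
        by move=> /fset1P -> /fset1P ->.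
      rewrite EW eqxx /= /T sep_wallsE VW /=.
      apply: (lift_sep yM); rewrite EW.
      by move: WS; rewrite sep_wallsE => /andP[].
    + by move=> i _; exact: lam_ge0.
rewrite (exchange_big_dep xpredT) //=; apply: ler_sum => W' _.
rewrite big_const_seq.
have -> : count (fun W => restrict M W' == W) (sep_walls mu M x y) =
          count_mem (restrict M W') (sep_walls mu M x y).
  by apply: eq_count => W; rewrite eq_sym.
rewrite count_uniq_mem ?fset_uniq //.
by case: (_ \in _) => /=; rewrite ?addr0 ?lexx ?lam_ge0.
Qed.
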